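(* Consider two state assemblages $\vec{\sigma}^{(1)}=\{\sigma^{(1)}_{a|x}\}_{a,x}$ and $\vec{\sigma}^{(2)}=\{\sigma^{(2)}_{a|x}\}_{a,x}$ on Bob's Hilbert space $\mathcal{H}_{\rm B}$. Denote their reduced states as $\rho^{(i)}:=\sum_a \sigma_{a|x}^{(i)}$, their ranges as $\mathcal{K}_i := {\rm ran}(\rho^{(i)})$, and the dimensions as $d_i:={\rm dim}( \mathcal{K}_i)$, for $i=1,2$. Then the following statements are equivalent: (i) $\vec{\sigma}^{(1)} \sim_{\rm SEO} \vec{\sigma}^{(2)}$, i.e., there is a unitary $U$ on $\mathcal{H}_{\rm B}$ such that $B_{a|x}^{(1)} \oplus 0_{\mathcal{K}_{1}^\perp} = U ( B^{(2)}_{a|x} \oplus 0_{\mathcal{K}_{2}^\perp} ) U^\dagger$ for all $a,x$, where $B^{(i)}$ is the steering-equivalent-observable measurement assemblage (SEO) of $\vec{\sigma}^{(i)}$; (ii) $\vec{\sigma}^{(1)} \sim_{{\rm LF_1}} \vec{\sigma}^{(2)}$, i.e., each assemblage can be transformed into the other by a single-Kraus-operator local filter on Bob's side; (iii) $\vec{\sigma}^{(2)}$ can be transformed into $\vec{\sigma}^{(1)}$ by a single-Kraus-operator local filter on Bob's side, and $d_1=d_2$. Moreover, in the case $\vec{\sigma}^{(1)} \sim_{\rm SEO} \vec{\sigma}^{(2)}$, the filter $K$ transforming $\vec{\sigma}^{(2)}$ into $\vec{\sigma}^{(1)}$ can be explicitly computed as a function of the reduced states $\rho^{(i)}$ and the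 unitary $U$ in (i). Such a filter can be constructed to have success probability \begin{equation} p_{\rm succ} = \left[\lambda_{\max}\left( {\rho^{(2)}}^{-1/2} U^\dagger \rho^{(1)} U{\rho^{(2)}}^{-1/2}\right)\right]^{-1}, \end{equation} where $\lambda_{\max}(X)$ denotes the maximum eigenvalue of the operator $X$ (and ${\rho^{(2)}}^{-1/2}$ denotes the inverse square root on the range of $\rho^{(2)}$, extended by $0$ on its orthogonal complement). This value is optimal if the initial assemblage $\{\sigma^{(2)}_{a|x}\}$ contains sufficiently many linearly independent operators (at least $d^2$, $d=\dim\mathcal{H}_{\rm B}$) to perform channel tomography.
   Context: Steering scenario: Alice and Bob share $\rho_{\rm AB}$; Alice measures POVMs $\{A_{a|x}\}_a$ and Bob's subnormalized conditional states are $\sigma_{a|x}={\rm tr}_{\rm A}[(A_{a|x}\otimes \mathbb{1})\rho_{\rm AB}]$; the collection $\vec{\sigma}=\{\sigma_{a|x}\}_{a,x}$ is a state assemblage, with reduced state $\rho_{\rm B}=\sum_a\sigma_{a|x}$ (independent of $x$). SEO: let $\mathcal{K}={\rm ran}(\rho_{\rm B})$, $\Pi_{\rm B}:\mathcal{H}_{\rm B}\to\mathcal{K}$ with $\Pi_{\rm B}\Pi_{\rm B}^*=\mathbb{1}_{\mathcal{K}}$, $\tilde\rho_{\rm B}=\Pi_{\rm B}\rho_{\rm B}\Pi_{\rm B}^*$, $\tilde\sigma_{a|x}=\Pi_{\rm B}\sigma_{a|x}\Pi_{\rm B}^*$; then $B_{a|x}:=\tilde\rho_{\rm B}^{-1/2}\tilde\sigma_{a|x}\tilde\rho_{\rm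 B}^{-1/2}$. A single-Kraus local filter (${\rm LF_1}$) on Bob's side maps $\sigma_{a|x}\mapsto K\sigma_{a|x}K^\dagger/p_{\rm succ}$ for all $a,x$, with $K^\dagger K\le\mathbb{1}$ and $p_{\rm succ}={\rm tr}[\sum_a\sigma_{a|x}K^\dagger K]>0$ ($\mathbb{1}$ the identity operator). $\vec{\sigma}^{(1)}\sim_{\rm LF_1}\vec{\sigma}^{(2)}$ means transformations exist in both directions. *)

(* Defs.v *)
From HB Require Import structures.
From mathcomp Require Import all_boot all_order all_algebra.
From mathcomp.real_closed Require Import mxtens.

Set Implicit Arguments.
Unset Strict Implicit.
Unset Printing Implicit Defensive.

Import Order.TTheory GRing.Theory Num.Theory.
Local Open Scope ring_scope.
Local Open Scope sesquilinear_scope.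

Section Steering.
Variable C : numClosedFieldType.

Definition adj m n (A : 'M[C]_(m, n)) : 'M[C]_(n, m) := A ^t*.

Definition psd n (A : 'M[C]_n) : Prop :=
  A = adj A /\ forall u : 'cV[C]_n, 0 <= (adj u *m A *m u) 0 0.

Definition loewner_le n (A B : 'M[C]_n) : Prop := psd (B - A).

Definition density n (rho : 'M[C]_n) : Prop := psd rho /\ \tr rho = 1.

Definition povm d nA (M : 'I_nA -> 'M[C]_d) : Prop :=
  (forall a, psd (M a)) /\ \sum_(a < nA) M a = 1%:M.

Definition ptrA dA n (M : 'M[C]_(dA * n)) : 'M[C]_n :=
  \matrix_(j, l) \sum_(i < dA) M (mxtens_index (i, j)) (mxtens_index (i, l)).

Definition assemblage n nA nX (sig : 'I_nA -> 'I_nX -> 'M[C]_n) : Prop :=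
  exists (dA : nat) (rhoAB : 'M[C]_(dA * n)) (M : 'I_nX -> 'I_nA -> 'M[C]_dA),
    [/\ density rhoAB, (forall x, povm (M x)) &
        forall a x, sig a x = ptrA ((M x a *t (1%:M : 'M[C]_n)) *m rhoAB)].

Definition red n nA nX (x0 : 'I_nX) (sig : 'I_nA -> 'I_nX -> 'M[C]_n) : 'M[C]_n :=
  \sum_(a < nA) sig a x0.

(* functional calculus for normal (in particular Hermitian) matrices,
   through the spectral decomposition A = P^-1 diag(sp) P, P unitary *)
Definition mxfun n (f : C -> C) (A : 'M[C]_n) : 'M[C]_n :=
  invmx (spectralmx A) *m diag_mx (map_mx f (spectral_diag A)) *m spectralmx A.

Definition sqrtmx n (A : 'M[C]_n) : 'M[C]_n := mxfun sqrtC A.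

Definition isqrtmx n (A : 'M[C]_n) : 'M[C]_n :=
  mxfun (fun t => if t == 0 then 0 else (sqrtC t)^-1) A.

(* steering-equivalent observables, embedded as B_{a|x} (+) 0 on H_B:
   rho^{-1/2} sigma_{a|x} rho^{-1/2} *)
Definition seo n nA nX (x0 : 'I_nX) (sig : 'I_nA -> 'I_nX -> 'M[C]_n)
  (a : 'I_nA) (x : 'I_nX) : 'M[C]_n :=
  isqrtmx (red x0 sig) *m sig a x *m isqrtmx (red x0 sig).

Definition seo_equiv n nA nX (x0 : 'I_nX) (s1 s2 : 'I_nA -> 'I_nX -> 'M[C]_n) : Prop :=
  exists U : 'M[C]_n, U \is unitarymx /\
    forall a x, seo x0 s1 a x = U *m seo x0 s2 a x *m adj U.

Definition psucc n nA nX (x0 : 'I_nX) (sig : 'I_nA -> 'I_nX -> 'M[C]_n)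
  (K : 'M[C]_n) : C :=
  \tr (red x0 sig *m (adj K *m K)).

Definition lf1_filter n nA nX (x0 : 'I_nX) (s t : 'I_nA -> 'I_nX -> 'M[C]_n)
  (K : 'M[C]_n) : Prop :=
  [/\ loewner_le (adj K *m K) 1%:M, 0 < psucc x0 s K &
      forall a x, t a x = (psucc x0 s K)^-1 *: (K *m s a x *m adj K)].

Definition lf1_trans n nA nX (x0 : 'I_nX) (s t : 'I_nA -> 'I_nX -> 'M[C]_n) : Prop :=
  exists K, lf1_filter x0 s t K.

Definition lf1_equiv n nA nX (x0 : 'I_nX) (s1 s2 : 'I_nA -> 'I_nX -> 'M[C]_n) : Prop :=
  lf1_trans x0 s1 s2 /\ lf1_trans x0 s2 s1.

Definition is_lambda_max n (X : 'M[C]_n) (l : C) : Prop :=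
  eigenvalue X l /\ forall m, eigenvalue X m -> m <= l.

Definition tomographic n nA nX (sig : 'I_nA -> 'I_nX -> 'M[C]_n) : Prop :=
  exists f : 'I_(n ^ 2) -> 'I_nA * 'I_nX,
    row_free (\matrix_(k < n ^ 2) mxvec (sig (f k).1 (f k).2)).

End Steering.

(* Main.v *)
Require Import Defs.
From HB Require Import structures.
From mathcomp Require Import all_boot all_order all_algebra.
From mathcomp.real_closed Require mxtens.

Import Order.TTheory GRing.Theory Num.Theory.
Local Open Scope ring_scope.

Module Helpers.
Import Num.Def.
Local Open Scope sesquilinear_scope.
Local Open Scope ring_scope.
Set Implicit Arguments.
Unset Strict Implicit.
Unset Printing Implicit Defensive.



Section Adj.
Variable C : numClosedFieldType.

Lemma adjE m n (A : 'M[C]_(m, n)) i j : adj A i j = conjC (A j i).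
Proof. by rewrite /adj !mxE. Qed.

Lemma adjK m n (A : 'M[C]_(m, n)) : adj (adj A) = A.
Proof. by apply/matrixP=> i j; rewrite !mxE conjCK. Qed.

Lemma adjM m n p (A : 'M[C]_(m, n)) (B : 'M[C]_(n, p)) :
  adj (A *m B) = adj B *m adj A.
Proof.
apply/matrixP=> i j; rewrite !mxE rmorph_sum; apply: eq_bigr => k _.
by rewrite !mxE rmorphM mulrC.
Qed.

Lemma adjD m n (A B : 'M[C]_(m, n)) : adj (A + B) = adj A + adj B.
Proof. by apply/matrixP=> i j; rewrite !mxE rmorphD. Qed.

Lemma adjN m n (A : 'M[C]_(m, n)) : adj (- A) = - adj A.
Proof. by apply/matrixP=> i j; rewrite !mxE rmorphN. Qed.

Lemma adjB m n (A B : 'M[C]_(m, n)) : adj (A - B) = adj A - adj B.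
Proof. by rewrite adjD adjN. Qed.

Lemma adjZ m n c (A : 'M[C]_(m, n)) : adj (c *: A) = conjC c *: adj A.
Proof. by apply/matrixP=> i j; rewrite !mxE rmorphM. Qed.

Lemma adj0 m n : adj (0 : 'M[C]_(m, n)) = 0.
Proof. by apply/matrixP=> i j; rewrite !mxE rmorph0. Qed.

Lemma adj_scalar n c : adj (c%:M : 'M[C]_n) = (conjC c)%:M.
Proof.
apply/matrixP=> i j; rewrite !mxE eq_sym.
by case: eqP => _; rewrite ?mulr1n ?mulr0n ?rmorph0.
Qed.

Lemma adj1 n : adj (1%:M : 'M[C]_n) = 1%:M.
Proof. by rewrite adj_scalar rmorph1. Qed.

Lemma adj_sum I (r : seq I) (P : pred I) m n (F : I -> 'M[C]_(m, n)) :
  adj (\sum_(i <- r | P i) F i) = \sum_(i <- r | P i) adj (F i).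
Proof.
elim/big_rec2: _ => [|i A B _ <-]; first by rewrite adj0.
by rewrite adjD.
Qed.

Lemma adj_unitary n (U : 'M[C]_n) : U \is unitarymx -> U *m adj U = 1%:M.
Proof. by move/unitarymxP. Qed.

Lemma adj_unitary' n (U : 'M[C]_n) : U \is unitarymx -> adj U *m U = 1%:M.
Proof. by move/unitarymxP/mulmx1C. Qed.

Lemma adj_unitaryP n (U : 'M[C]_n) : U \is unitarymx -> adj U \is unitarymx.
Proof. by move=> hU; apply/unitarymxP; rewrite -/(adj _) adjK adj_unitary'. Qed.

Lemma matrix_cV_eq0 m n (M : 'M[C]_(m, n)) :
  (forall u : 'cV[C]_n, M *m u = 0) -> M = 0.
Proof.
move=> h; apply/matrixP=> i j.
have /matrixP/(_ i 0) := h (col j 1%:M).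
rewrite !mxE => <-.
rewrite (bigD1 j) //= big1 ?addr0; first by rewrite !mxE eqxx mulr1.
by move=> k /negbTE kj; rewrite !mxE kj mulr0.
Qed.

Lemma adj_mul_eq0 m n (X : 'M[C]_(m, n)) : adj X *m X = 0 -> X = 0.
Proof.
move=> h; apply/matrixP=> i j.
have /matrixP/(_ j j) := h; rewrite !mxE => /eqP.
rewrite psumr_eq0 => [/allP H|k _]; last by rewrite !mxE mulrC mul_conjC_ge0.
have := H i (mem_index_enum _); rewrite !mxE mulrC mul_conjC_eq0.
by move/eqP.
Qed.

End Adj.



Section FC.
Variable C : numClosedFieldType.
Variable n : nat.
Implicit Types (A : 'M[C]_n) (f g : C -> C).

Local Notation SP A := (spectralmx A).
Local Notation SD A := (spectral_diag A).

Lemma SP_unitary A : SP A \is unitarymx.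
Proof. exact: spectral_unitarymx. Qed.

Lemma SP_adj A : SP A *m adj (SP A) = 1%:M.
Proof. exact/adj_unitary/SP_unitary. Qed.

Lemma SP_adj' A : adj (SP A) *m SP A = 1%:M.
Proof. exact/adj_unitary'/SP_unitary. Qed.

Lemma invmx_SP A : invmx (SP A) = adj (SP A).
Proof. by rewrite invmx_unitary ?SP_unitary. Qed.

Lemma mxfunE f A : mxfun f A = adj (SP A) *m diag_mx (map_mx f (SD A)) *m SP A.
Proof. by rewrite /mxfun invmx_unitary ?spectral_unitarymx. Qed.

Lemma herm_normal A : A = adj A -> A \is normalmx.
Proof. by move=> hA; apply/normalmxP; rewrite -[A^t*]/(adj A) -hA. Qed.

Lemma herm_hermsym A : A = adj A -> A \is hermsymmx.
Proof. by move=> hA; apply/is_hermitianmxP; rewrite expr0 scale1r. Qed.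

Lemma mxfun_id A : A = adj A -> mxfun id A = A.
Proof.
move=> hA; rewrite /mxfun map_mx_id //.
by have /orthomx_spectralP <- := herm_normal hA.
Qed.


Lemma mxfun_ext f g A : (forall i, f (SD A 0 i) = g (SD A 0 i)) ->
  mxfun f A = mxfun g A.
Proof.
move=> h; rewrite !mxfunE; congr (_ *m diag_mx _ *m _).
by apply/matrixP=> i j; rewrite !mxE ord1 h.
Qed.


Lemma mxfunD f g A :
  mxfun (fun t => f t + g t) A = mxfun f A + mxfun g A.
Proof.
rewrite !mxfunE -mulmxDl -mulmxDr; congr (_ *m _ *m _).
by apply/matrixP=> i j; rewrite !mxE; case: eqP => _; rewrite ?mulr1n ?mulr0n ?addr0.
Qed.

Lemma mxfunZ c f A : mxfun (fun t => c * f t) A = c *: mxfun f A.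
Proof.
rewrite !mxfunE scalemxAl scalemxAr; congr (_ *m _ *m _).
by apply/matrixP=> i j; rewrite !mxE; case: eqP => _; rewrite ?mulr1n ?mulr0n ?mulr0.
Qed.

Lemma adj_diag (d : 'rV[C]_n) : adj (diag_mx d) = diag_mx (map_mx conjC d).
Proof.
apply/matrixP=> i j; rewrite !mxE eq_sym.
by case: eqP => [->|]; rewrite ?mulr1n ?mulr0n ?rmorph0.
Qed.

Lemma adj_mxfun f A : adj (mxfun f A) = mxfun (fun t => conjC (f t)) A.
Proof.
rewrite !mxfunE !adjM adjK adj_diag mulmxA; congr (_ *m diag_mx _ *m _).
by apply/matrixP=> i j; rewrite !mxE.
Qed.

Lemma SD_diag A : A = adj A -> diag_mx (SD A) = SP A *m A *m adj (SP A).
Proof.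
move=> hA; have /orthomx_spectralP hA' := herm_normal hA.
rewrite invmx_SP in hA'; have h1 := SP_adj A; have h2 := SP_adj' A.
move: hA' h1 h2; set P := SP A; set D := SD A => hA' h1 h2.
by rewrite [in RHS]hA' !mulmxA h1 mul1mx -mulmxA h1 mulmx1.
Qed.

Lemma SD_real A : A = adj A -> forall i, SD A 0 i \is Num.real.
Proof.
move=> hA i; have := hermitian_spectral_diag_real (herm_hermsym hA).
by move/mxOverP => /(_ 0 i).
Qed.

Lemma quad_form_entry (X Y : 'M[C]_n) i :
  (adj (col i (adj X)) *m Y *m col i (adj X)) 0 0 = (X *m Y *m adj X) i i.
Proof.
have -> : adj (col i (adj X)) = row i X.
  by apply/matrixP=> a b; rewrite !mxE conjCK.
rewrite -row_mul !mxE; apply: eq_bigr => k _; rewrite !mxE.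
by congr (_ * _).
Qed.

Lemma SD_ge0 A : psd A -> forall i, 0 <= SD A 0 i.
Proof.
move=> [hA hq] i.
have := hq (col i (adj (SP A))); rewrite quad_form_entry -SD_diag //.
by rewrite mxE eqxx mulr1n.
Qed.

Lemma psd_mxfun f A : A = adj A -> (forall i, 0 <= f (SD A 0 i)) ->
  psd (mxfun f A).
Proof.
move=> hA hf; split.
  rewrite adj_mxfun; apply: mxfun_ext => i.
  by rewrite geC0_conj.
move=> u; rewrite mxfunE.
set w := SP A *m u.
have -> : adj u *m (adj (SP A) *m diag_mx (map_mx f (SD A)) *m SP A) *m u
   = adj w *m diag_mx (map_mx f (SD A)) *m w.
  by rewrite /w adjM !mulmxA.
rewrite !mxE; apply: sumr_ge0 => k _; rewrite !mxE.
rewrite (bigD1 k) //= big1 => [|j /negbTE jk]; last by rewrite !mxE jk mulr0n mulr0.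
rewrite addr0 !mxE eqxx mulr1n -mulrA mulrC -mulrA; apply: mulr_ge0 => //.
by rewrite mul_conjC_ge0.
Qed.


Lemma mxfun_cst c A : mxfun (fun _ => c) A = c%:M.
Proof.
rewrite mxfunE.
have -> : map_mx (fun _ => c) (SD A) = const_mx c by apply/matrixP=> i j; rewrite !mxE.
rewrite diag_const_mx mul_mx_scalar -scalemxAl SP_adj' scalemx1.
by [].
Qed.

Lemma mxfun_affine a b A : A = adj A ->
  mxfun (fun t => a + b * t) A = a%:M + b *: A.
Proof.
move=> hA; rewrite mxfunD mxfun_cst mxfunZ.
by rewrite -[X in b *: mxfun X A]/id mxfun_id.
Qed.

Lemma mxfunM f g A :
  mxfun f A *m mxfun g A = mxfun (fun t => f t * g t) A.
Proof.
rewrite !mxfunE.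
rewrite -!mulmxA; congr (_ *m _); rewrite !mulmxA.
rewrite -[_ *m SP A *m adj (SP A)]mulmxA SP_adj mulmx1 mulmx_diag.
by congr (diag_mx _ *m _); apply/rowP=> j; rewrite !mxE.
Qed.

End FC.



Section PSD.
Variable C : numClosedFieldType.
Variable n : nat.
Implicit Types (A rho sig : 'M[C]_n) (f g : C -> C).

Definition prjmx A : 'M[C]_n := mxfun (fun t => (t != 0)%:R) A.
Definition isq (t : C) : C := if t == 0 then 0 else (sqrtC t)^-1.

Lemma isqrtmxE A : isqrtmx A = mxfun isq A.
Proof. by []. Qed.

Lemma mxfunMl f A : A = adj A -> mxfun f A *m A = mxfun (fun t => f t * t) A.
Proof. by move=> hA; rewrite -{2}(mxfun_id hA) mxfunM. Qed.

Lemma mxfunMr f A : A = adj A -> A *m mxfun f A = mxfun (fun t => t * f t) A.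
Proof. by move=> hA; rewrite -{1}(mxfun_id hA) mxfunM. Qed.

Lemma psd_herm A : psd A -> A = adj A.
Proof. by case. Qed.

Lemma sqrtC_isq t : sqrtC t * isq t = (t != 0)%:R.
Proof.
rewrite /isq; case: eqP => [->|/eqP t0]; first by rewrite mulr0.
by rewrite mulfV // sqrtC_eq0.
Qed.

Lemma isq_sqrtC t : isq t * sqrtC t = (t != 0)%:R.
Proof. by rewrite mulrC sqrtC_isq. Qed.

Lemma isq_t_isq t : isq t * t * isq t = (t != 0)%:R.
Proof.
rewrite /isq; case: eqP => [->|/eqP t0]; first by rewrite !mul0r.
rewrite -{2}(sqrtCK t) expr2 mulrA mulVf ?sqrtC_eq0 // mul1r mulfV //.
by rewrite sqrtC_eq0.
Qed.

Lemma sq_sq A : A = adj A -> sqrtmx A *m sqrtmx A = A.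
Proof.
move=> hA; rewrite /sqrtmx mxfunM -{2}(mxfun_id hA).
by apply: mxfun_ext => i; rewrite -expr2 sqrtCK.
Qed.

Lemma isq_A_isq A : A = adj A -> isqrtmx A *m A *m isqrtmx A = prjmx A.
Proof. by move=> hA; rewrite isqrtmxE mxfunMl // mxfunM; apply: mxfun_ext => i; rewrite isq_t_isq. Qed.

Lemma sq_isq A : sqrtmx A *m isqrtmx A = prjmx A.
Proof. by rewrite /sqrtmx isqrtmxE mxfunM; apply: mxfun_ext => i; rewrite sqrtC_isq. Qed.

Lemma isq_sq A : isqrtmx A *m sqrtmx A = prjmx A.
Proof. by rewrite /sqrtmx isqrtmxE mxfunM; apply: mxfun_ext => i; rewrite isq_sqrtC. Qed.

Lemma prj_A A : A = adj A -> prjmx A *m A = A.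
Proof.
move=> hA; rewrite /prjmx mxfunMl // -{2}(mxfun_id hA); apply: mxfun_ext => i.
by case: (eqVneq (spectral_diag A 0 i) 0) => [e|h]; rewrite ?e ?mulr0 ?mul1r.
Qed.

Lemma A_prj A : A = adj A -> A *m prjmx A = A.
Proof.
move=> hA; rewrite /prjmx mxfunMr // -{2}(mxfun_id hA); apply: mxfun_ext => i.
by case: (eqVneq (spectral_diag A 0 i) 0) => [e|h]; rewrite ?e ?mulr0 ?mulr1.
Qed.

Lemma prj_sq A : prjmx A *m sqrtmx A = sqrtmx A.
Proof.
rewrite /prjmx /sqrtmx mxfunM; apply: mxfun_ext => i.
by case: (eqVneq (spectral_diag A 0 i) 0) => [e|h]; rewrite ?e ?sqrtC0 ?mulr0 ?mul1r.
Qed.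

Lemma sq_prj A : sqrtmx A *m prjmx A = sqrtmx A.
Proof.
rewrite /prjmx /sqrtmx mxfunM; apply: mxfun_ext => i.
by case: (eqVneq (spectral_diag A 0 i) 0) => [e|h]; rewrite ?e ?sqrtC0 ?mulr0 ?mulr1.
Qed.

Lemma prj_isq A : prjmx A *m isqrtmx A = isqrtmx A.
Proof.
rewrite /prjmx isqrtmxE mxfunM; apply: mxfun_ext => i.
by rewrite /isq; case: (eqVneq (spectral_diag A 0 i) 0) => [e|h]; rewrite ?e ?eqxx ?mulr0 ?mul1r.
Qed.

Lemma isq_prj A : isqrtmx A *m prjmx A = isqrtmx A.
Proof.
rewrite /prjmx isqrtmxE mxfunM; apply: mxfun_ext => i.
by rewrite /isq; case: (eqVneq (spectral_diag A 0 i) 0) => [e|h]; rewrite ?e ?eqxx ?mulr0 ?mulr1.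
Qed.

Lemma prj_prj A : prjmx A *m prjmx A = prjmx A.
Proof.
rewrite /prjmx mxfunM; apply: mxfun_ext => i.
by case: (eqVneq (spectral_diag A 0 i) 0) => [e|h]; rewrite ?e ?mulr0 ?mulr1.
Qed.

Lemma adj_prj A : adj (prjmx A) = prjmx A.
Proof.
rewrite /prjmx adj_mxfun; apply: mxfun_ext => i.
by case: eqP; rewrite ?rmorph0 ?rmorph1.
Qed.

Lemma adj_sq A : psd A -> adj (sqrtmx A) = sqrtmx A.
Proof.
move=> hA; rewrite /sqrtmx adj_mxfun; apply: mxfun_ext => i.
by rewrite geC0_conj // sqrtC_ge0 SD_ge0.
Qed.

Lemma adj_isq A : psd A -> adj (isqrtmx A) = isqrtmx A.
Proof.
move=> hA; rewrite isqrtmxE adj_mxfun; apply: mxfun_ext => i.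
rewrite /isq; case: eqP => _; first by rewrite rmorph0.
by rewrite geC0_conj // invr_ge0 sqrtC_ge0 SD_ge0.
Qed.

Lemma psd_sq A : psd A -> psd (sqrtmx A).
Proof.
move=> hA; apply: psd_mxfun; first exact: psd_herm.
by move=> i; rewrite sqrtC_ge0 SD_ge0.
Qed.

Definition qf (A : 'M[C]_n) (u : 'cV[C]_n) : C := (adj u *m A *m u) 0 0.

Lemma qfB A B u : qf (A - B) u = qf A u - qf B u.
Proof. by rewrite /qf mulmxBr mulmxBl !mxE. Qed.

Lemma psd_quad0 sig (v : 'cV[C]_n) : psd sig -> qf sig v = 0 -> sig *m v = 0.
Proof.
move=> hs hq.
have hS := adj_sq hs.
set S := sqrtmx sig in hS.
have hss : S *m S = sig by apply: sq_sq; apply: psd_herm.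
have : adj (S *m v) *m (S *m v) = 0.
  apply/matrixP=> i j; rewrite !ord1 adjM hS mulmxA -[adj v *m S *m S]mulmxA hss.
  by rewrite [RHS]mxE; exact: hq.
move/adj_mul_eq0 => Sv0.
by rewrite -hss -mulmxA Sv0 mulmx0.
Qed.

Lemma support sig rho : psd sig -> psd (rho - sig) -> psd rho ->
  prjmx rho *m sig = sig /\ sig *m prjmx rho = sig.
Proof.
move=> hs hrs hr.
have hR := psd_herm hr; have hS := psd_herm hs.
set Q := mxfun (fun t => (t == 0)%:R) rho.
have hQP : Q + prjmx rho = 1%:M.
  rewrite /prjmx -mxfunD -(mxfun_cst 1 rho); apply: mxfun_ext => i.
  by case: eqP => _; rewrite ?addr0 ?add0r.
have hQ : Q = 1%:M - prjmx rho by rewrite -hQP addrK.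
have hadjQ : adj Q = Q by rewrite hQ adjB adj1 adj_prj.
have hrQ : rho *m Q = 0.
  rewrite /Q mxfunMr // (mxfun_ext (g := fun _ => 0)); last first.
    by move=> i; case: eqP => [->|]; rewrite ?mulr0 ?mul0r.
  by rewrite mxfun_cst; apply/matrixP=> i j; rewrite !mxE mul0rn.
have hsQ : sig *m Q = 0.
  apply: matrix_cV_eq0 => u; rewrite -mulmxA; apply: psd_quad0 => //.
  have h1 : qf rho (Q *m u) = 0.
    by rewrite /qf adjM hadjQ mulmxA -[adj u *m Q *m rho *m Q]mulmxA hrQ
        mulmx0 mul0mx mxE.
  have h2 := (proj2 hrs) (Q *m u); rewrite -/(qf _ _) qfB h1 sub0r oppr_ge0 in h2.
  have h3 := (proj2 hs) (Q *m u); rewrite -/(qf _ _) in h3.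
  by apply/le_anti; rewrite h2 h3.
have h4 : sig *m prjmx rho = sig.
  have : sig *m (Q + prjmx rho) = sig by rewrite hQP mulmx1.
  by rewrite mulmxDr hsQ add0r.
split => //.
have : adj (sig *m prjmx rho) = adj sig by rewrite h4.
by rewrite adjM adj_prj -hS.
Qed.

End PSD.



Section Eig.
Variable C : numClosedFieldType.
Variable n : nat.
Implicit Types (X : 'M[C]_n).

Local Notation SP A := (spectralmx A).
Local Notation SD A := (spectral_diag A).

Lemma spec_decomp X : X = adj X -> X = adj (SP X) *m diag_mx (SD X) *m SP X.
Proof.
move=> hX; have /orthomx_spectralP := herm_normal hX.
by rewrite invmx_SP.
Qed.

Lemma SP_X X : X = adj X -> SP X *m X = diag_mx (SD X) *m SP X.
Proof.
move=> hX; have := spec_decomp hX; have h1 := SP_adj X.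
move: h1; set P := SP X; set D := SD X => h1 hX'.
by rewrite {1}hX' !mulmxA h1 mul1mx.
Qed.

Lemma X_adjSP X : X = adj X -> X *m adj (SP X) = adj (SP X) *m diag_mx (SD X).
Proof.
move=> hX; have := spec_decomp hX; have h1 := SP_adj X.
move: h1; set P := SP X; set D := SD X => h1 hX'.
by rewrite {1}hX' -mulmxA h1 mulmx1.
Qed.

Lemma eig_SD X k : X = adj X -> eigenvalue X (SD X 0 k).
Proof.
move=> hX; apply/eigenvalueP; exists (row k (SP X)).
  by rewrite -row_mul SP_X // row_mul row_diag_mx -scalemxAl -rowE.
apply/negP => /eqP h0.
have := SP_adj X; move/(congr1 (row k)); rewrite row_mul h0 mul0mx.
move/rowP/(_ k); rewrite !mxE eqxx /= => /eqP; by rewrite eq_sym oner_eq0.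
Qed.

Lemma eig_SD_inv X m : X = adj X -> eigenvalue X m -> exists k, m = SD X 0 k.
Proof.
move=> hX /eigenvalueP [v hv v0].
set w := v *m adj (SP X).
have hw : w *m diag_mx (SD X) = m *: w.
  rewrite /w -mulmxA -X_adjSP // mulmxA hv scalemxAl //.
have w0 : w != 0.
  apply: contraNneq v0 => h.
  have : w *m SP X = v by rewrite /w -mulmxA SP_adj' mulmx1.
  by rewrite h mul0mx => <-.
clearbody w.
have [k wk] : exists k, w 0 k != 0.
  case: (pickP (fun k => w 0 k != 0)) => [k hk|h]; first by exists k.
  by case/eqP: w0; apply/rowP => k; rewrite [RHS]mxE; have := h k; rewrite /= => /negbFE /eqP.
exists k; move/rowP: hw => /(_ k); rewrite mul_mx_diag !mxE => e.
by apply: (mulfI wk); rewrite e mulrC.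
Qed.

Lemma eigvec X k : X = adj X ->
  X *m col k (adj (SP X)) = SD X 0 k *: col k (adj (SP X)).
Proof.
move=> hX; rewrite !colE mulmxA X_adjSP // -mulmxA scalemxAr; congr (_ *m _).
by apply/matrixP => i j; rewrite mul_diag_mx !mxE; case: eqP => [->|]; rewrite ?mulr0 ?mulr1.
Qed.

Lemma eigvec_norm X k : adj (col k (adj (SP X))) *m col k (adj (SP X)) = 1.
Proof.
have := SP_adj X; move/matrixP => /(_ k k); rewrite !mxE eqxx /= => e.
apply/matrixP => i j; rewrite !ord1 !mxE -e; apply: eq_bigr => l _.
by rewrite !mxE conjCK.
Qed.

End Eig.

Lemma seq_max (C : numDomainType) (s : seq C) x0 :
  all (fun x => x \is Num.real) (x0 :: s) ->
  exists2 m, m \in x0 :: s & forall y, y \in x0 :: s -> y <= m.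
Proof.
elim: s x0 => [|y s IH] x0 /=.
  by move=> _; exists x0 => [|y]; rewrite ?mem_seq1 // => /eqP ->.
case/and3P => rx0 ry rs.
have [m hm hmax] := IH y (introT andP (conj ry rs)).
have rm : m \is Num.real by move: hm; rewrite inE => /orP[/eqP->//|/(allP rs)].
case/orP: (real_leVge rx0 rm) => h.
  exists m; first by rewrite inE hm orbT.
  by move=> z; rewrite inE => /orP[/eqP->//|/hmax].
exists x0; first by rewrite inE eqxx.
move=> z; rewrite inE => /orP[/eqP->//|/hmax hz]; exact: le_trans hz h.
Qed.

Lemma exists_max (C : numDomainType) n (f : 'I_n -> C) : (0 < n)%N ->
  (forall i, f i \is Num.real) -> exists k, forall i, f i <= f k.
Proof.
case: n f => // n f _ hf.
set s := [seq f i | i <- enum 'I_n.+1].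
have hs : s = f ord0 :: behead s by rewrite /s enum_ordSl.
have hall : all (fun x => x \is Num.real) (f ord0 :: behead s).
  by rewrite -hs; apply/allP => x /mapP [i _ ->].
have [m hm hmax] := @seq_max C (behead s) (f ord0) hall.
rewrite -hs in hm hmax; case/mapP: hm => k _ e.
by exists k => i; rewrite -e; apply: hmax; apply: map_f; rewrite mem_enum.
Qed.



Section Asm.
Variable C : numClosedFieldType.

Local Notation idx := (@mxtens.mxtens_index _ _).
Local Notation tens := mxtens.tensmx.

Lemma sum_tens m p (F : 'I_(m * p) -> C) :
  \sum_k F k = \sum_i \sum_j F (idx (i, j)).
Proof.
rewrite pair_big /= (reindex (@mxtens.mxtens_index m p)) /=.
  by apply: eq_bigr => -[i j].
exists (@mxtens.mxtens_unindex m p) => k _; rewrite (mxtens.mxtens_indexK, mxtens.mxtens_unindexK) //.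
Qed.

Lemma tensE m nn p q (A : 'M[C]_(m, nn)) (B : 'M[C]_(p, q)) i j k l :
  tens A B (idx (i, j)) (idx (k, l)) = A i k * B j l.
Proof. exact: mxtens.tensmxE. Qed.

Lemma ptrA_formula dA n (A : 'M[C]_dA) (rho : 'M[C]_(dA * n)) j l :
  ptrA (tens A (1%:M : 'M[C]_n) *m rho) j l =
  \sum_i \sum_i' A i i' * rho (idx (i', j)) (idx (i, l)).
Proof.
rewrite mxE; apply: eq_bigr => i _; rewrite mxE sum_tens.
apply: eq_bigr => i' _; rewrite (bigD1 j) //= big1 => [|j' /negbTE hj].
  by rewrite tensE mxE eqxx mulr1 addr0.
by rewrite tensE mxE eq_sym hj mulr0 mul0r.
Qed.

Lemma ptrA_sum dA n I (r : seq I) (F : I -> 'M[C]_(dA * n)) :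
  ptrA (\sum_(a <- r) F a) = \sum_(a <- r) ptrA (F a).
Proof.
apply/matrixP => j l; rewrite !mxE summxE.
under eq_bigr => i _ do rewrite summxE.
rewrite exchange_big /=; apply: eq_bigr => a _; by rewrite mxE.
Qed.

Lemma tens_suml dA n I (r : seq I) (F : I -> 'M[C]_dA) (B : 'M[C]_n) :
  tens (\sum_(a <- r) F a) B = \sum_(a <- r) tens (F a) B.
Proof.
apply/matrixP => p q; rewrite !mxE summxE summxE big_distrl /=.
by apply: eq_bigr => a _; rewrite !mxE.
Qed.

Lemma tens11 dA n : tens (1%:M : 'M[C]_dA) (1%:M : 'M[C]_n) = 1%:M.
Proof.
apply/matrixP => p q.
case: (mxtens.mxtens_indexP p) => i j; case: (mxtens.mxtens_indexP q) => i' j'.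
rewrite tensE !mxE (can_eq (@mxtens.mxtens_indexK _ _)) xpair_eqE.
by case: (i == i'); case: (j == j'); rewrite ?mulr1n ?mulr0n ?mulr1 ?mulr0 ?mul0r.
Qed.

Lemma ptrA_adj dA n (Y : 'M[C]_(dA * n)) : adj (ptrA Y) = ptrA (adj Y).
Proof.
apply/matrixP => j l; rewrite !mxE rmorph_sum; apply: eq_bigr => i _.
by rewrite !mxE.
Qed.

Lemma ptrA_tr dA n (Y : 'M[C]_(dA * n)) : \tr (ptrA Y) = \tr Y.
Proof.
rewrite /mxtrace sum_tens exchange_big /=; apply: eq_bigr => j _.
by rewrite mxE.
Qed.

Lemma sum_delta m (i : 'I_m) (F : 'I_m -> C) : \sum_a (a == i)%:R * F a = F i.
Proof.
rewrite (bigD1 i) //= big1 ?addr0 ?eqxx ?mul1r // => a /negbTE ->.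
by rewrite mul0r.
Qed.

Lemma tens_vecE dA n (i : 'I_dA) (u : 'cV[C]_n) a j k :
  tens (delta_mx i 0 : 'cV[C]_dA) u (idx (a, j)) k = (a == i)%:R * u j 0.
Proof.
rewrite mxE (@mxtens.mxtens_indexK _ _) /= (ord1 (mxtens.mxtens_unindex k).1)
  (ord1 (mxtens.mxtens_unindex k).2) !mxE eqxx andbT.
by case: (a == i).
Qed.

Lemma qf_ptrA dA n (Y : 'M[C]_(dA * n)) (u : 'cV[C]_n) :
  qf (ptrA Y) u = \sum_i qf Y (tens (delta_mx i 0 : 'cV[C]_dA) u).
Proof.
transitivity (\sum_i \sum_l \sum_j conjC (u j 0) * Y (idx (i, j)) (idx (i, l)) * u l 0).
  rewrite /qf mxE.
  under eq_bigr => l _ do rewrite mxE big_distrl /=.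
  under eq_bigr => l _ do under eq_bigr => j _ do rewrite !mxE big_distrr big_distrl /=.
  under eq_bigr => l _ do rewrite exchange_big /=.
  rewrite exchange_big /=; apply: eq_bigr => i _; apply: eq_bigr => l _.
  by apply: eq_bigr => j _.
apply: eq_bigr => i _; symmetry; rewrite /qf mxE sum_tens exchange_big /=.
apply: eq_bigr => l _.
under eq_bigr => a _ do rewrite tens_vecE mulrCA.
rewrite sum_delta -big_distrl /=; congr (_ * _).
rewrite mxE sum_tens.
rewrite (eq_bigr (fun a => (a == i)%:R *
   \sum_j conjC (u j 0) * Y (idx (a, j)) (idx (i, l)))); last first.
  move=> a _; rewrite big_distrr; apply: eq_bigr => j _ /=.
  by rewrite 2!mxE tens_vecE rmorphM rmorph_nat -mulrA.
by rewrite sum_delta.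
Qed.

Lemma psd_congr n (Y B : 'M[C]_n) : psd Y -> B = adj B -> psd (B *m Y *m B).
Proof.
move=> [hY hq] hB; split.
  by rewrite !adjM -hB -hY mulmxA.
move=> u; have := hq (B *m u).
by rewrite /qf adjM -hB !mulmxA.
Qed.

Lemma ptrA_cyc dA n (X : 'M[C]_dA) (Y : 'M[C]_(dA * n)) :
  ptrA (tens X (1%:M : 'M[C]_n) *m Y) = ptrA (Y *m tens X 1%:M).
Proof.
apply/matrixP => j l; rewrite ptrA_formula mxE exchange_big /=.
apply: eq_bigr => i _; rewrite mxE sum_tens; apply: eq_bigr => i' _.
rewrite (bigD1 l) //= big1 => [|j' /negbTE hj].
  by rewrite tensE mxE eqxx mulr1 addr0 mulrC.
by rewrite tensE mxE hj mulr0 mulr0.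
Qed.

Lemma psd_ptrA dA n (Y : 'M[C]_(dA * n)) : psd Y -> psd (ptrA Y).
Proof.
move=> [hY hq]; split; first by rewrite ptrA_adj -hY.
by move=> u; rewrite -[(adj u *m _ *m u) 0 0]/(qf (ptrA Y) u) qf_ptrA; apply: sumr_ge0 => i _; apply: hq.
Qed.

Lemma tens_mul1 dA n (A B : 'M[C]_dA) :
  tens A (1%:M : 'M[C]_n) *m tens B 1%:M = tens (A *m B) 1%:M.
Proof. by rewrite mxtens.tensmx_mul mulmx1. Qed.

Lemma adj_tens1 dA n (A : 'M[C]_dA) :
  adj (tens A (1%:M : 'M[C]_n)) = tens (adj A) 1%:M.
Proof.
apply/matrixP => p q.
case: (mxtens.mxtens_indexP p) => i j; case: (mxtens.mxtens_indexP q) => i' j'.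
rewrite tensE 2!mxE tensE rmorphM !mxE.
rewrite eq_sym; congr (_ * _); by case: (j == j'); rewrite /= ?mulr1n ?mulr0n ?rmorph1 ?rmorph0.
Qed.

Lemma asm_props n nA nX (s : 'I_nA -> 'I_nX -> 'M[C]_n) : assemblage s ->
  [/\ (forall a x, psd (s a x)),
      (forall x x', \sum_a s a x = \sum_a s a x') &
      forall x, \tr (\sum_a s a x) = 1].
Proof.
case=> dA [rho [M [[hr htr] hM hs]]].
have hsum x : \sum_a s a x = ptrA rho.
  under eq_bigr => a _ do rewrite hs.
  rewrite -ptrA_sum -mulmx_suml -tens_suml (proj2 (hM x)) tens11 mul1mx //.
split.
- move=> a x; rewrite hs.
  have hMa := (proj1 (hM x)) a.
  have hT := adj_sq hMa; set T := sqrtmx (M x a) in hT.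
  have hTT : T *m T = M x a by apply: sq_sq; apply: psd_herm.
  rewrite -hTT -tens_mul1 -mulmxA ptrA_cyc.
  apply: psd_ptrA; apply: psd_congr => //.
  by rewrite adj_tens1 hT.
- by move=> x x'; rewrite !hsum.
- by move=> x; rewrite hsum ptrA_tr.
Qed.

End Asm.



Section Gen.
Variable C : numClosedFieldType.
Variable n : nat.
Implicit Types (A B P Q R Y : 'M[C]_n).

Lemma psd0 : psd (0 : 'M[C]_n).
Proof. by split; [rewrite adj0|move=> u; rewrite mulmx0 mul0mx mxE]. Qed.

Lemma psdD A B : psd A -> psd B -> psd (A + B).
Proof.
move=> [hA qA] [hB qB]; split; first by rewrite adjD -hA -hB.
move=> u; rewrite mulmxDr mulmxDl mxE; exact: addr_ge0.
Qed.

Lemma psd_sum I (r : seq I) (Pr : pred I) (F : I -> 'M[C]_n) :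
  (forall i, Pr i -> psd (F i)) -> psd (\sum_(i <- r | Pr i) F i).
Proof.
move=> h; elim/big_rec: _ => [|i X Pi hX]; first exact: psd0.
by apply: psdD => //; apply: h.
Qed.

Lemma psd_adjmul m (L : 'M[C]_(m, n)) : psd (adj L *m L).
Proof.
split; first by rewrite adjM adjK.
move=> u; rewrite mulmxA -adjM -mulmxA mxE.
apply: sumr_ge0 => i _.
have -> : adj (L *m u) 0 i = conjC ((L *m u) i 0) by rewrite !mxE.
by rewrite mulrC mul_conjC_ge0.
Qed.

Lemma proj_eq P Q : P = adj P -> Q = adj Q -> P *m P = P -> Q *m Q = Q ->
  (Q <= P)%MS -> \rank Q = \rank P -> Q = P.
Proof.
move=> hP hQ iP iQ sQP rk.
have : (P <= Q)%MS.
  by have [_ <-] := mxrank_leqif_sup sQP; rewrite rk.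
case/submxP => D hD.
have hPQ : P *m Q = P by rewrite hD -mulmxA iQ.
have /submxP [D' hD'] := sQP.
have hQP : Q *m P = Q by rewrite hD' -mulmxA iP.
have := congr1 (@adj _ _ _) hPQ.
by rewrite adjM -hP -hQ hQP.
Qed.

Lemma rank_compl P : P *m P = P -> \rank (1%:M - P) = (n - \rank P)%N.
Proof.
move=> iP; rewrite -mxrank_ker; apply/eqP; rewrite eqn_leq; apply/andP; split.
  apply: mxrankS; apply/sub_kermxP.
  by rewrite mulmxBl mul1mx iP subrr.
apply: mxrankS.
have -> : kermx P = kermx P *m (1%:M - P).
  by rewrite mulmxBr mulmx1 mulmx_ker subr0.
exact: submxMl.
Qed.

Lemma partial_iso_gen r1 r2 (G1 : 'M[C]_(r1, n)) (G2 : 'M[C]_(r2, n)) :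
  r1 = r2 -> G1 *m adj G1 = 1%:M -> G2 *m adj G2 = 1%:M ->
  exists V : 'M[C]_n, [/\ adj V *m V = adj G2 *m G2,
     V *m adj V = adj G1 *m G1 & V *m (adj G2 *m G2) = V].
Proof.
move=> e; subst r2 => h1 h2; exists (adj G1 *m G2); split.
- by rewrite adjM adjK mulmxA -[adj G2 *m G1 *m adj G1]mulmxA h1 mulmx1.
- by rewrite adjM adjK mulmxA -[adj G1 *m G2 *m adj G2]mulmxA h2 mulmx1.
- by rewrite mulmxA -[adj G1 *m G2 *m adj G2]mulmxA h2 mulmx1.
Qed.

Lemma schmidt_proj R : R = adj R -> R *m R = R ->
  let G := schmidt (row_base R) in G *m adj G = 1%:M /\ adj G *m G = R.
Proof.
move=> hR iR G.
have hG : G *m adj G = 1%:M.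
  by apply/unitarymxP; apply: schmidt_unitarymx; exact: rank_leq_col.
split => //.
have rkG : \rank G = \rank R by rewrite (mxrank_unitary (schmidt_unitarymx _ (rank_leq_col R))).
have sGR : (G <= R)%MS.
  by rewrite /G (eqmx_schmidt_free (row_base_free R)) eq_row_base.
apply: proj_eq => //.
- by rewrite adjM adjK.
- by rewrite mulmxA -[adj G *m G *m adj G]mulmxA hG mulmx1.
- exact: submx_trans (submxMl _ _) sGR.
- apply/eqP; rewrite eqn_leq; apply/andP; split.
    by rewrite (leq_trans (mxrankM_maxr _ _)) // rkG.
  rewrite -[X in (X <= _)%N]rkG.
  apply: (leq_trans _ (mxrankM_maxr G (adj G *m G))).
  by rewrite mulmxA hG mul1mx leqnn.
Qed.

Lemma partial_iso R1 R2 : R1 = adj R1 -> R1 *m R1 = R1 ->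
  R2 = adj R2 -> R2 *m R2 = R2 -> \rank R1 = \rank R2 ->
  exists V : 'M[C]_n, [/\ adj V *m V = R2, V *m adj V = R1 & V *m R2 = V].
Proof.
move=> h1 i1 h2 i2 rk.
have [g1 e1] := schmidt_proj h1 i1.
have [g2 e2] := schmidt_proj h2 i2.
have [V [v1 v2 v3]] := partial_iso_gen rk g1 g2.
by exists V; rewrite -e1 -e2.
Qed.

Lemma tr_quad m (A : 'M[C]_(m, n)) (u : 'cV[C]_n) :
  \tr (A *m (u *m adj u) *m adj A) = qf (adj A *m A) u.
Proof.
rewrite /qf mulmxA -[A *m u *m adj u *m adj A]mulmxA -adjM mxtrace_mulC.
by rewrite trace_mx11 adjM !mulmxA.
Qed.

End Gen.



Lemma mulmxR (R : pzRingType) m1 m2 m3 m4 (X : 'M[R]_(m1, m2)) (Y : 'M[R]_(m2, m3))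
  (Z : 'M[R]_(m1, m3)) (W : 'M[R]_(m3, m4)) : X *m Y = Z -> X *m (Y *m W) = Z *m W.
Proof. by move=> h; rewrite mulmxA h. Qed.

Lemma scalar0mx (R : pzRingType) n : (0 : R)%:M = 0 :> 'M[R]_n.
Proof. by apply/matrixP=> i j; rewrite !mxE mul0rn. Qed.

Section Main.
Variable C : numClosedFieldType.
Variables n nA nX : nat.
Variable x0 : 'I_nX.
Implicit Types (s t : 'I_nA -> 'I_nX -> 'M[C]_n).

Definition good s := [/\ forall a x, psd (s a x),
  forall x, \sum_a s a x = red x0 s & \tr (red x0 s) = 1].

Lemma good_asm s : assemblage s -> good s.
Proof.
case/asm_props => h1 h2 h3; split => //.
- by move=> x; rewrite /red (h2 x x0).
- exact: h3.
Qed.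

Lemma tom_span s : tomographic s -> exists f : 'I_(n ^ 2) -> 'I_nA * 'I_nX,
  forall Y : 'M[C]_n, exists w : 'I_(n ^ 2) -> C,
    Y = \sum_k w k *: s (f k).1 (f k).2.
Proof.
case=> f hf; exists f => Y.
set Mt := \matrix_(k < n ^ 2) mxvec (s (f k).1 (f k).2).
have full : row_full Mt.
  by move: hf; rewrite /row_free /row_full -/Mt => /eqP ->; rewrite mulnn.
have /submxP [D hD] := submx_full (mxvec Y) full.
exists (fun k => D 0 k).
rewrite -(mxvecK Y) hD mulmx_sum_row linear_sum; apply: eq_bigr => k _.
by rewrite linearZ /= rowK mxvecK.
Qed.

Lemma conj_sum m (A : 'M[C]_n) (w : 'I_m -> C) (F : 'I_m -> 'M[C]_n) :
  A *m (\sum_k w k *: F k) *m adj A = \sum_k w k *: (A *m F k *m adj A).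
Proof.
rewrite mulmx_sumr mulmx_suml; apply: eq_bigr => k _.
by rewrite -scalemxAr -scalemxAl.
Qed.

Lemma conj_sumZ (A : 'M[C]_n) c (F : 'I_nA -> 'M[C]_n) :
  \sum_a c *: (A *m F a *m adj A) = c *: (A *m (\sum_a F a) *m adj A).
Proof. by rewrite mulmx_sumr mulmx_suml scaler_sumr. Qed.

Section Good.
Variable s : 'I_nA -> 'I_nX -> 'M[C]_n.
Hypothesis hs : good s.

Local Notation r := (red x0 s).
Local Notation S := (sqrtmx (red x0 s)).
Local Notation I := (isqrtmx (red x0 s)).
Local Notation P := (prjmx (red x0 s)).

Lemma g_psd a x : psd (s a x). Proof. by case: hs. Qed.
Lemma g_sum x : \sum_a s a x = r. Proof. by case: hs. Qed.
Lemma g_tr : \tr r = 1. Proof. by case: hs. Qed.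

Lemma g_rpsd : psd r.
Proof. by rewrite /red; apply: psd_sum => a _; exact: g_psd. Qed.

Lemma g_rh : r = adj r. Proof. exact: psd_herm g_rpsd. Qed.

Lemma g_le a x : psd (r - s a x).
Proof.
rewrite -(g_sum x) (bigD1 a) //= addrAC subrr add0r.
by apply: psd_sum => b _; exact: g_psd.
Qed.

Lemma g_supp a x : P *m s a x = s a x /\ s a x *m P = s a x.
Proof. exact: support (g_psd a x) (g_le a x) g_rpsd. Qed.

Lemma g_adjS : adj S = S. Proof. exact: adj_sq g_rpsd. Qed.
Lemma g_adjI : adj I = I. Proof. exact: adj_isq g_rpsd. Qed.

Lemma g_seo_sum x : \sum_a seo x0 s a x = P.
Proof.
have h := isq_A_isq g_rh; rewrite /seo; move: h; move: (isqrtmx r) (prjmx r) => I0 P0 h.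
by rewrite -mulmx_suml -mulmx_sumr g_sum.
Qed.

Lemma g_sig_seo a x : S *m seo x0 s a x *m S = s a x.
Proof.
have h1 := sq_isq r; have h2 := isq_sq r; have [h3 h4] := g_supp a x.
rewrite /seo; move: h1 h2 h3 h4.
move: (sqrtmx r) (isqrtmx r) (prjmx r) => S0 I0 P0 h1 h2 h3 h4.
by rewrite !mulmxA h1 -[P0 *m s a x *m I0 *m S0]mulmxA h2 -mulmxA h4 h3.
Qed.

Lemma g_adj_seo a x : adj (seo x0 s a x) = seo x0 s a x.
Proof.
have hI := g_adjI; have hs' := psd_herm (g_psd a x).
rewrite /seo; move: hI; move: (isqrtmx r) => I0 hI.
by rewrite !adjM hI -hs' mulmxA.
Qed.

Lemma g_prj_seo a x : P *m seo x0 s a x = seo x0 s a x.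
Proof.
have h := prj_isq r; rewrite /seo; move: h; move: (isqrtmx r) (prjmx r) => I0 P0 h.
by rewrite !mulmxA h.
Qed.

Lemma g_seo_prj a x : seo x0 s a x *m P = seo x0 s a x.
Proof.
have h := isq_prj r; rewrite /seo; move: h; move: (isqrtmx r) (prjmx r) => I0 P0 h.
by rewrite -mulmxA h.
Qed.

Lemma g_rank_prj : \rank P = \rank r.
Proof.
apply/eqP; rewrite eqn_leq; apply/andP; split.
  have h := isq_A_isq g_rh; move: h; move: (isqrtmx r) (prjmx r) => I0 P0 <-.
  exact: leq_trans (mxrankM_maxl _ _) (mxrankM_maxr _ _).
have h := prj_A g_rh; move: h; move: (prjmx r) => P0 h.
by rewrite -{1}h; exact: mxrankM_maxl.
Qed.

Lemma g_npos : (0 < n)%N.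
Proof.
case: (posnP n) => // n0; have := g_tr; rewrite /mxtrace.
by move: (red x0 s); rewrite n0 => M; rewrite big_ord0 => /eqP; rewrite eq_sym oner_eq0.
Qed.

End Good.

End Main.



Section Claims.
Variable C : numClosedFieldType.
Variables n nA nX : nat.
Variable x0 : 'I_nX.
Implicit Types (s t : 'I_nA -> 'I_nX -> 'M[C]_n).

Lemma filter_red s t K : lf1_filter x0 s t K ->
  red x0 t = (psucc x0 s K)^-1 *: (K *m red x0 s *m adj K).
Proof.
case=> _ _ hK; rewrite {1}/red; under eq_bigr => a _ do rewrite hK.
by rewrite conj_sumZ.
Qed.

Lemma claimC s t : lf1_trans x0 s t -> (\rank (red x0 t) <= \rank (red x0 s))%N.
Proof.
case=> K hK; rewrite (filter_red hK); apply: leq_trans (mxrank_scale _ _) _.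
exact: leq_trans (mxrankM_maxl _ _) (mxrankM_maxr _ _).
Qed.

Lemma sqrt_inv_facts (q : C) : 0 < q ->
  conjC (sqrtC q) = sqrtC q /\ sqrtC q * sqrtC q = q.
Proof.
move=> hq; split; first by rewrite geC0_conj // sqrtC_ge0 ltW.
by rewrite -expr2 sqrtCK.
Qed.

Lemma seo_sym s1 s2 : seo_equiv x0 s1 s2 -> seo_equiv x0 s2 s1.
Proof.
case=> U [hU h]; exists (adj U); split; first exact: adj_unitaryP.
move=> a x; rewrite (h a x) adjK; move: (seo x0 s2 a x) => Y.
by rewrite !mulmxA (adj_unitary' hU) mul1mx -mulmxA (adj_unitary' hU) mulmx1.
Qed.

Lemma mulmxZZ (a b : C) m1 m2 m3 (X : 'M[C]_(m1, m2)) (Y : 'M[C]_(m2, m3)) :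
  (a *: X) *m (b *: Y) = (a * b) *: (X *m Y).
Proof. by rewrite -scalemxAl -scalemxAr scalerA. Qed.

Lemma claimA s1 s2 : good x0 s1 -> good x0 s2 -> lf1_trans x0 s2 s1 ->
  \rank (red x0 s1) = \rank (red x0 s2) -> seo_equiv x0 s1 s2.
Proof.
move=> g1 g2 [K hK] rk.
have hr := filter_red hK.
case: hK => _ hp hK.
move: hp hK hr; set p := psucc x0 s2 K => hp hK hr.
have hp0 : p != 0 by rewrite gt_eqF.
have hKr : K *m red x0 s2 *m adj K = p *: red x0 s1.
  by rewrite hr scalerA mulfV // scale1r.
have [hc hcc] : conjC (sqrtC p^-1) = sqrtC p^-1 /\ sqrtC p^-1 * sqrtC p^-1 = p^-1.
  by apply: sqrt_inv_facts; rewrite invr_gt0.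
have f1 := isq_A_isq (g_rh g1).
have f2 := sq_sq (g_rh g2).
have aS2 := g_adjS g2; have aI1 := g_adjI g1.
have aP1 := adj_prj (red x0 s1); have aP2 := adj_prj (red x0 s2).
have f4 := sq_prj (red x0 s2); have f4' := prj_isq (red x0 s1).
have f5 := sq_isq (red x0 s2); have f5' := isq_sq (red x0 s2).
have i1 := prj_prj (red x0 s1); have i2 := prj_prj (red x0 s2).
have rk1 := g_rank_prj g1; have rk2 := g_rank_prj g2.
have sup2 := g_supp g2.
have pseo := g_prj_seo x0 s2.
have aseo := g_adj_seo g2.
have hseo1 a x : seo x0 s1 a x = isqrtmx (red x0 s1) *m s1 a x *m isqrtmx (red x0 s1) by [].
have hseo2 a x : seo x0 s2 a x = isqrtmx (red x0 s2) *m s2 a x *m isqrtmx (red x0 s2) by [].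
rewrite /seo_equiv.
move: hseo1 hseo2 pseo aseo sup2 f1 f2 aS2 aI1 aP1 aP2 f4 f4' f5 f5' i1 i2 rk1 rk2 hKr hK.
move: (seo x0 s1) (seo x0 s2) => seo1 seo2.
move: (sqrtmx (red x0 s2)) (isqrtmx (red x0 s1)) (isqrtmx (red x0 s2))
      (prjmx (red x0 s1)) (prjmx (red x0 s2)) => S2 I1 I2 P1 P2.
move: (red x0 s1) (red x0 s2) rk => r1 r2 rk.
move=> hseo1 hseo2 pseo aseo sup2 f1 f2 aS2 aI1 aP1 aP2 f4 f4' f5 f5' i1 i2 rk1 rk2 hKr hK.
set c := sqrtC p^-1 in hc hcc.
set W := c *: (I1 *m K *m S2).
have aW : adj W = c *: (S2 *m adj K *m I1).
  by rewrite adjZ hc !adjM aS2 aI1 mulmxA.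
have hWW : W *m adj W = P1.
  rewrite aW -scalemxAl -scalemxAr scalerA hcc.
  have hKr' : I1 *m K *m r2 *m adj K *m I1 = p *: (I1 *m r1 *m I1).
    by rewrite -[I1 *m K *m r2]mulmxA -[I1 *m (K *m r2) *m adj K]mulmxA hKr
      -scalemxAr -scalemxAl.
  rewrite !mulmxA -[I1 *m K *m S2 *m S2]mulmxA f2 hKr' scalerA mulVf //.
  by rewrite scale1r f1.
have hWP2 : W *m P2 = W by rewrite /W -scalemxAl -mulmxA f4.
have hP1W : P1 *m W = W by rewrite /W -scalemxAr !mulmxA f4'.
have hWP1 : adj W *m P1 = adj W by rewrite -aP1 -adjM hP1W.
set Q := adj W *m W.
have hQh : Q = adj Q by rewrite /Q adjM adjK.
have hQQ : Q *m Q = Q.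
  by rewrite /Q mulmxA -[adj W *m W *m adj W]mulmxA hWW hWP1.
have hQP2 : Q *m P2 = Q by rewrite /Q -mulmxA hWP2.
have hWQ : W *m Q = W by rewrite /Q mulmxA hWW hP1W.
have rW1 : (\rank P1 <= \rank W)%N by rewrite -hWW mxrankM_maxl.
have rW2 : (\rank W <= \rank P2)%N by rewrite -{1}hWP2 mxrankM_maxr.
have rWQ : (\rank W <= \rank Q)%N by rewrite -{1}hWQ mxrankM_maxr.
have rQW : (\rank Q <= \rank W)%N by rewrite mxrankM_maxr.
have rP : \rank P1 = \rank P2 by rewrite rk1 rk2 rk.
have rkQ : \rank Q = \rank P2.
  apply/eqP; rewrite eqn_leq (leq_trans rQW rW2) /=.
  by rewrite -rP (leq_trans rW1 rWQ).
have hQ : Q = P2.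
  apply: (proj_eq (esym aP2) hQh i2 hQQ _ rkQ).
  by rewrite -hQP2 submxMl.
set R1 := 1%:M - P1; set R2 := 1%:M - P2.
have hR1 : R1 = adj R1 by rewrite /R1 adjB adj1 aP1.
have hR2 : R2 = adj R2 by rewrite /R2 adjB adj1 aP2.
have iR1 : R1 *m R1 = R1.
  by rewrite /R1 mulmxBl mul1mx mulmxBr mulmx1 i1 subrr subr0.
have iR2 : R2 *m R2 = R2.
  by rewrite /R2 mulmxBl mul1mx mulmxBr mulmx1 i2 subrr subr0.
have rkR : \rank R1 = \rank R2 by rewrite /R1 /R2 !rank_compl // rP.
have [V [v1 v2 v3]] := partial_iso hR1 iR1 hR2 iR2 rkR.
have aV : adj V = R2 *m adj V by rewrite -{1}v3 adjM -hR2.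
have P2R2 : P2 *m R2 = 0 by rewrite /R2 mulmxBr mulmx1 i2 subrr.
have R2P2 : R2 *m P2 = 0 by rewrite /R2 mulmxBl mul1mx i2 subrr.
have hWV : W *m adj V = 0 by rewrite aV -{1}hWP2 mulmxA -[W *m P2 *m R2]mulmxA P2R2 mulmx0 mul0mx.
have hVW : V *m adj W = 0.
  by have := congr1 (@adj _ _ _) hWV; rewrite adjM adjK adj0.
exists (W + V); split.
  apply/unitarymxP; change ((W + V) *m adj (W + V) = 1%:M).
  rewrite adjD mulmxDl !mulmxDr hWW hWV hVW v2 addr0 add0r /R1.
  by rewrite addrC subrK.
move=> a x.
have hV2 : V *m seo2 a x = 0.
  by rewrite -v3 -(pseo a x) mulmxA -[V *m R2 *m P2]mulmxA R2P2 mulmx0 mul0mx.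
have hV2' : seo2 a x *m adj V = 0.
  by have := congr1 (@adj _ _ _) hV2; rewrite adjM aseo adj0.
rewrite adjD mulmxDl hV2 addr0 mulmxDr -[W *m seo2 a x *m adj V]mulmxA hV2' mulmx0 addr0.
rewrite aW /W; symmetry; rewrite -scalemxAl mulmxZZ hcc hseo2 hseo1 (hK a x).
have [sp1 sp2] := sup2 a x.
rewrite -scalemxAr -scalemxAl; congr (_ *: _).
rewrite !mulmxA -[I1 *m K *m S2 *m I2]mulmxA f5 -[I1 *m K *m P2 *m s2 a x]mulmxA sp1.
by rewrite -[I1 *m K *m s2 a x *m I2 *m S2]mulmxA f5' -[I1 *m K *m s2 a x *m P2]mulmxA sp2.
Qed.

End Claims.



Section ClaimB.
Variable C : numClosedFieldType.
Variables n nA nX : nat.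
Variable x0 : 'I_nX.
Implicit Types (s t : 'I_nA -> 'I_nX -> 'M[C]_n).

Lemma claimB s1 s2 (U : 'M[C]_n) : good x0 s1 -> good x0 s2 -> U \is unitarymx ->
  (forall a x, seo x0 s1 a x = U *m seo x0 s2 a x *m adj U) ->
  exists l : C,
    [/\ is_lambda_max
          (isqrtmx (red x0 s2) *m adj U *m red x0 s1 *m U *m isqrtmx (red x0 s2)) l,
        lf1_filter x0 s2 s1
          (sqrtC l^-1 *: (sqrtmx (red x0 s1) *m U *m isqrtmx (red x0 s2))),
        psucc x0 s2
          (sqrtC l^-1 *: (sqrtmx (red x0 s1) *m U *m isqrtmx (red x0 s2))) = l^-1 &
        tomographic s2 ->
          forall K : 'M[C]_n, lf1_filter x0 s2 s1 K -> psucc x0 s2 K <= l^-1].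
Proof.
move=> g1 g2 hU hseo.
have npos := g_npos g2.
have hP : prjmx (red x0 s1) = U *m prjmx (red x0 s2) *m adj U.
  rewrite -(g_seo_sum g1 x0) -(g_seo_sum g2 x0) mulmx_sumr mulmx_suml.
  by apply: eq_bigr => a _; rewrite hseo.
set X := isqrtmx (red x0 s2) *m adj U *m red x0 s1 *m U *m isqrtmx (red x0 s2).
set L := sqrtmx (red x0 s1) *m U *m isqrtmx (red x0 s2).
have hL : forall a x, L *m s2 a x *m adj L = s1 a x.
  move=> a x; rewrite -(g_sig_seo g1 a x) hseo.
  have aS1 := g_adjS g1; have aI2 := g_adjI g2.
  rewrite /L /seo; move: aS1 aI2.
  move: (sqrtmx (red x0 s1)) (isqrtmx (red x0 s2)) => S1 I2 aS1 aI2.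
  by rewrite !adjM aS1 aI2 !mulmxA.
have hX : X = adj L *m L.
  have aS1 := g_adjS g1; have aI2 := g_adjI g2; have f2 := sq_sq (g_rh g1).
  rewrite /X /L; move: aS1 aI2 f2.
  move: (sqrtmx (red x0 s1)) (isqrtmx (red x0 s2)) => S1 I2 aS1 aI2 f2.
  by rewrite !adjM aS1 aI2 !mulmxA -[I2 *m adj U *m S1 *m S1]mulmxA f2.
have Xpsd : psd X by rewrite hX; exact: psd_adjmul.
have hXh : X = adj X := psd_herm Xpsd.
have htr : \tr (red x0 s2 *m X) = 1.
  have f1 := isq_A_isq (g_rh g2); have f3 := prj_A (g_rh g1).
  have ht := g_tr g1.
  rewrite /X; move: f1 f3 ht hP.
  move: (isqrtmx (red x0 s2)) (prjmx (red x0 s1)) (prjmx (red x0 s2)) => I2 P1 P2 f1 f3 ht hP.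
  rewrite !mulmxA mxtrace_mulC !mulmxA f1 mxtrace_mulC !mulmxA -hP.
  by rewrite f3.
have X0 : X != 0.
  apply/eqP => e; move: htr; rewrite e mulmx0 mxtrace0 => /eqP.
  by rewrite eq_sym oner_eq0.
have hreal := SD_real hXh.
have [k hk] := exists_max npos hreal.
set l := spectral_diag X 0 k in hk.
have l_ge0 : 0 <= l := SD_ge0 Xpsd k.
have l_gt0 : 0 < l.
  rewrite lt_def l_ge0 andbT; apply: contra X0 => /eqP l0.
  apply/eqP; rewrite -(mxfun_id hXh) (mxfun_ext (g := fun _ => 0)) ?mxfun_cst ?scalar0mx //.
  by move=> i /=; apply/le_anti; rewrite SD_ge0 // andbT -l0; exact: hk.
exists l.
have [hc hcc] : conjC (sqrtC l^-1) = sqrtC l^-1 /\ sqrtC l^-1 * sqrtC l^-1 = l^-1.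
  by apply: sqrt_inv_facts; rewrite invr_gt0.
set c := sqrtC l^-1 in hc hcc *.
have hKK : adj (c *: L) *m (c *: L) = l^-1 *: X by rewrite adjZ hc mulmxZZ hcc hX.
have hps : psucc x0 s2 (c *: L) = l^-1.
  by rewrite /psucc hKK -scalemxAr mxtraceZ htr mulr1.
split => //.
- split; first exact: eig_SD.
  by move=> m /(eig_SD_inv hXh) [k' ->]; exact: hk.
- split.
  + rewrite /loewner_le hKK -scaleNr -mxfun_affine //; apply: psd_mxfun => // i.
    by rewrite mulNr subr_ge0 mulrC ler_pdivrMr // mul1r; exact: hk.
  + by rewrite hps invr_gt0.
  + move=> a x; rewrite hps invrK adjZ hc -scalemxAl mulmxZZ hcc hL scalerA.
    by rewrite mulfV ?gt_eqF // scale1r.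
move=> htom K [hle hp hK].
have [f hspan] := tom_span htom.
move: hp hK; set p := psucc x0 s2 K => hp hK.
have hK2 a x : K *m s2 a x *m adj K = p *: s1 a x.
  by rewrite hK scalerA mulfV ?gt_eqF // scale1r.
set u := col k (adj (spectralmx X)).
have hu1 : adj u *m u = 1 := eigvec_norm X k.
have hXu : X *m u = l *: u := eigvec k hXh.
have hY : K *m (u *m adj u) *m adj K = p *: (L *m (u *m adj u) *m adj L).
  have [w ->] := hspan (u *m adj u).
  rewrite !conj_sum scaler_sumr; apply: eq_bigr => j _.
  by rewrite hK2 hL !scalerA mulrC.
have qX : qf X u = l.
  by rewrite /qf -mulmxA hXu -scalemxAr hu1 !mxE eqxx mulr1.
have q1 : qf 1%:M u = 1 by rewrite /qf mulmx1 hu1 mxE eqxx.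
have := congr1 mxtrace hY; rewrite mxtraceZ !tr_quad -hX qX => e.
have := (proj2 hle) u; rewrite -/(qf _ _) qfB q1 e subr_ge0 => hpl.
by rewrite -div1r ler_pdivlMr.
Qed.

End ClaimB.

End Helpers.
Import Helpers.

Theorem theorem1 (C : numClosedFieldType) (n nA nX : nat) (x0 : 'I_nX)
  (s1 s2 : 'I_nA -> 'I_nX -> 'M[C]_n) :
  assemblage s1 -> assemblage s2 ->
  [/\ (seo_equiv x0 s1 s2 <-> lf1_equiv x0 s1 s2),
      (lf1_equiv x0 s1 s2 <->
         (lf1_trans x0 s2 s1 /\ \rank (red x0 s1) = \rank (red x0 s2))) &
      forall U : 'M[C]_n, U \is unitarymx ->
        (forall a x, seo x0 s1 a x = U *m seo x0 s2 a x *m adj U) ->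
        exists l : C,
          [/\ is_lambda_max
                (isqrtmx (red x0 s2) *m adj U *m red x0 s1 *m U *m isqrtmx (red x0 s2)) l,
              lf1_filter x0 s2 s1
                (sqrtC l^-1 *: (sqrtmx (red x0 s1) *m U *m isqrtmx (red x0 s2))),
              psucc x0 s2
                (sqrtC l^-1 *: (sqrtmx (red x0 s1) *m U *m isqrtmx (red x0 s2))) = l^-1 &
              tomographic s2 ->
                forall K : 'M[C]_n, lf1_filter x0 s2 s1 K -> psucc x0 s2 K <= l^-1]].
Proof.
move=> a1 a2.
have g1 := good_asm x0 a1; have g2 := good_asm x0 a2.
have seo_lf : seo_equiv x0 s1 s2 -> lf1_equiv x0 s1 s2.
  move=> hE; split.
  - have [U [hU h]] := seo_sym hE.
    have [l [_ hf _ _]] := claimB g2 g1 hU h.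
    by exists (sqrtC l^-1 *: (sqrtmx (red x0 s2) *m U *m isqrtmx (red x0 s1))).
  - have [U [hU h]] := hE.
    have [l [_ hf _ _]] := claimB g1 g2 hU h.
    by exists (sqrtC l^-1 *: (sqrtmx (red x0 s1) *m U *m isqrtmx (red x0 s2))).
have lf_rank : lf1_equiv x0 s1 s2 -> \rank (red x0 s1) = \rank (red x0 s2).
  by case=> h12 h21; apply/eqP; rewrite eqn_leq (claimC h21) (claimC h12).
split.
- split; first exact: seo_lf.
  by move=> h; apply: claimA g1 g2 h.2 (lf_rank h).
- split; first by move=> h; split; [exact: h.2 | exact: lf_rank].
  by case=> h rk; apply: seo_lf; exact: claimA g1 g2 h rk.
- by move=> U hU h; exact: claimB g1 g2 hU h.
Qed.
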